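(* Let $m,n\in\mathbb{N}$ be coprime with $1\le m\le n-1$, and let $\Gamma$ be a $\mathbb{D}_n$-symmetric billiard curve with equivariant parametrization $\gamma$. Let $Z\in\Gamma^{\mathbb{Z}}$ be an $n$-periodic billiard sequence of rotation number $\frac mn$ with lift $X\in\Sigma$, and suppose every rotation in $\mathbb{Z}_n=\langle R\rangle$ is a spatiotemporal symmetry of $Z$. Then: - $Z$ is Birkhoff, $Z_i=R^{mi}(Z_0)$, and $X_i=X_0+\frac mni$ for all $i$; - the segment length $\|Z_{i+1}-Z_i\|$ and the curvature $\kappa(Z_i)$ are independent of $i$; - if moreover $Z$ is a billiard orbit, then $\theta_i:=\tfrac12\angle(Z_{i+1}-Z_i,\,Z_i-Z_{i-1})=\frac{m\pi}{n}$ for all $i$.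
   Context: $\mathbb{D}_n=\langle R,S\rangle$, where $R$ is counterclockwise rotation by $2\pi/n$ and $S$ is the horizontal reflection. $\Gamma$ is a $C^2$ simple closed $\mathbb{D}_n$-invariant curve bounding a strictly convex domain, parametrized counterclockwise by a $1$-periodic $C^2$ immersion $\gamma$ descending to an embedding of $\mathbb{R}/\mathbb{Z}$, with $\gamma(x+1/n)=R\gamma(x)$ and $\gamma(-x)=S\gamma(x)$. A billiard sequence has $Z_i\ne Z_{i+1}$, with lift $X\in\Sigma=\{0<X_{i+1}-X_i<1\}$, $\gamma(X_i)=Z_i$. The rotation number is $\lim X_i/i$. $h$ is a spatiotemporal symmetry of $Z$ if there is $k$ with $h(Z_i)=Z_{k+i}$ for all $i$ or $h(Z_i)=Z_{k-i}$ for all $i$. Birkhoff means the lift satisfies $X_i\le X_j+l\Rightarrow X_{i+m}\le X_{j+m}+l$ for all integers. A billiard orbit is a billiard sequence satisfying the reflection law at each point. $\kappa$ is the curvature of $\Gamma$. *)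

(* Defs.v *)
From Stdlib Require Import Reals ZArith Arith.
From Coquelicot Require Import Coquelicot.
Open Scope R_scope.

Definition pt := (R * R)%type.

Definition padd (p q : pt) : pt := (fst p + fst q, snd p + snd q).
Definition psub (p q : pt) : pt := (fst p - fst q, snd p - snd q).
Definition pscale (a : R) (p : pt) : pt := (a * fst p, a * snd p).
Definition dot (p q : pt) : R := fst p * fst q + snd p * snd q.
Definition det2 (p q : pt) : R := fst p * snd q - snd p * fst q.
Definition pnorm (p : pt) : R := sqrt (dot p p).
Definition pdist (p q : pt) : R := pnorm (psub p q).
Definition unitv (p : pt) : pt := pscale (/ pnorm p) p.

Definition rot (a : R) (p : pt) : pt :=
  (cos a * fst p - sin a * snd p, sin a * fst p + cos a * snd p).

Definition Rgen (n : nat) : pt -> pt := rot (2 * PI / INR n).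
Definition Rpow (n : nat) (k : Z) : pt -> pt := rot (IZR k * (2 * PI / INR n)).
Definition Sref (p : pt) : pt := (fst p, - snd p).

Definition interior (K : pt -> Prop) (p : pt) : Prop :=
  exists eps, 0 < eps /\ forall q, pdist p q < eps -> K q.
Definition boundary (K : pt -> Prop) (p : pt) : Prop :=
  forall eps, 0 < eps ->
    (exists q, K q /\ pdist p q < eps) /\ (exists q, ~ K q /\ pdist p q < eps).
Definition strictly_convex (K : pt -> Prop) : Prop :=
  forall p q t, K p -> K q -> p <> q -> 0 < t < 1 ->
    interior K (padd (pscale (1 - t) p) (pscale t q)).

Definition d1 (g : R -> pt) (x : R) : pt :=
  (Derive (fun s => fst (g s)) x, Derive (fun s => snd (g s)) x).
Definition d2 (g : R -> pt) (x : R) : pt :=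
  (Derive_n (fun s => fst (g s)) 2 x, Derive_n (fun s => snd (g s)) 2 x).

Definition C2 (f : R -> R) : Prop :=
  (forall x, ex_derive f x) /\ (forall x, ex_derive (Derive f) x) /\
  (forall x, continuous (Derive_n f 2) x).

Definition curv (g : R -> pt) (x : R) : R :=
  det2 (d1 g x) (d2 g x) / (pnorm (d1 g x)) ^ 3.

Definition onCurve (g : R -> pt) (p : pt) : Prop := exists x, g x = p.

Definition billiard_curve (g : R -> pt) : Prop :=
  C2 (fun s => fst (g s)) /\ C2 (fun s => snd (g s)) /\
  (forall x, d1 g x <> (0, 0)) /\
  (forall x, g (x + 1) = g x) /\
  (forall x y, g x = g y -> exists k : Z, y = x + IZR k) /\
  exists K : pt -> Prop,
    strictly_convex K /\
    (forall p, boundary K p <-> onCurve g p) /\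
    (* counterclockwise: the domain lies to the left of the velocity *)
    (forall x p, interior K p -> det2 (d1 g x) (psub p (g x)) > 0).

Definition Dn_equivariant (n : nat) (g : R -> pt) : Prop :=
  (forall x, g (x + / INR n) = Rgen n (g x)) /\
  (forall x, g (- x) = Sref (g x)).

Definition billiard_seq_lift (g : R -> pt) (Zs : Z -> pt) (X : Z -> R) : Prop :=
  (forall i, Zs i <> Zs (i + 1)%Z) /\
  (forall i, 0 < X (i + 1)%Z - X i < 1) /\
  (forall i, g (X i) = Zs i).

Definition rotation_number (X : Z -> R) (rho : R) : Prop :=
  is_lim_seq (fun k : nat => X (Z.of_nat k) / INR k) rho.

Definition spatiotemporal_symmetry (h : pt -> pt) (Zs : Z -> pt) : Prop :=
  exists k : Z, (forall i, h (Zs i) = Zs (k + i)%Z) \/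
                (forall i, h (Zs i) = Zs (k - i)%Z).

Definition Birkhoff (X : Z -> R) : Prop :=
  forall i j l m : Z, X i <= X j + IZR l -> X (i + m)%Z <= X (j + m)%Z + IZR l.

(* reflection law at each point: the unit incoming and outgoing directions
   make the same angle with the tangent vector, i.e. the outgoing direction
   is the mirror image of the incoming one in the tangent line *)
Definition billiard_orbit (g : R -> pt) (Zs : Z -> pt) (X : Z -> R) : Prop :=
  forall i,
    dot (unitv (psub (Zs i) (Zs (i - 1)%Z))) (d1 g (X i)) =
    dot (unitv (psub (Zs (i + 1)%Z) (Zs i))) (d1 g (X i)).

Definition is_ccw_angle (v w : pt) (phi : R) : Prop :=
  0 <= phi < 2 * PI /\ unitv w = rot phi (unitv v).

(* Main.v *)
Require Import Defs.
From Stdlib Require Import Reals ZArith Arith Lra Lia.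
From Coquelicot Require Import Coquelicot.
Open Scope R_scope.

Lemma cs1 b : cos b ^ 2 + sin b ^ 2 = 1.
Proof. rewrite <- (sin2_cos2 b). unfold Rsqr. ring. Qed.

Lemma rot_comp a b p : rot a (rot b p) = rot (a + b) p.
Proof. destruct p as [x y]; unfold rot; simpl; rewrite cos_plus, sin_plus; f_equal; ring. Qed.

Lemma rot0 p : rot 0 p = p.
Proof. destruct p as [x y]; unfold rot; simpl; rewrite cos_0, sin_0; f_equal; ring. Qed.

Lemma rot_inv a p : rot (- a) (rot a p) = p.
Proof. rewrite rot_comp. replace (-a + a) with 0 by ring. apply rot0. Qed.

Lemma dot_rot b p q : dot (rot b p) (rot b q) = dot p q.
Proof. destruct p, q; unfold dot, rot; simpl.
transitivity ((cos b ^ 2 + sin b ^ 2) * (r * r1 + r0 * r2)). ring. rewrite cs1; ring. Qed.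

Lemma det_rot b p q : det2 (rot b p) (rot b q) = det2 p q.
Proof. destruct p, q; unfold det2, rot; simpl.
transitivity ((cos b ^ 2 + sin b ^ 2) * (r * r2 - r0 * r1)). ring. rewrite cs1; ring. Qed.

Lemma pnorm_rot b p : pnorm (rot b p) = pnorm p.
Proof. unfold pnorm; rewrite dot_rot; auto. Qed.

Lemma psub_rot b p q : psub (rot b p) (rot b q) = rot b (psub p q).
Proof. destruct p, q; unfold psub, rot; simpl; f_equal; ring. Qed.

Lemma pdist_rot b p q : pdist (rot b p) (rot b q) = pdist p q.
Proof. unfold pdist; rewrite psub_rot, pnorm_rot; auto. Qed.

Lemma unitv_rot b p : unitv (rot b p) = rot b (unitv p).
Proof. unfold unitv; rewrite pnorm_rot. destruct p; unfold pscale, rot; simpl; f_equal; ring. Qed.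

Lemma pred_IZR z : IZR (Z.pred z) = IZR z - 1.
Proof. unfold Z.pred; rewrite plus_IZR; simpl; ring. Qed.

Lemma shift_Z (Y : Z -> R) s c : (forall i, Y (i + s)%Z = Y i + c) ->
  forall j i, Y (i + j * s)%Z = Y i + IZR j * c.
Proof.
intros H j. induction j using Z.peano_ind; intros i.
- rewrite Z.mul_0_l, Z.add_0_r; simpl; ring.
- replace (i + Z.succ j * s)%Z with ((i + j * s) + s)%Z by (unfold Z.succ; ring).
  rewrite H, IHj, succ_IZR; ring.
- specialize (H (i + Z.pred j * s)%Z).
  replace (i + Z.pred j * s + s)%Z with (i + j * s)%Z in H by (unfold Z.pred; ring).
  rewrite IHj in H. rewrite pred_IZR. lra.
Qed.

Lemma const_succ (f : Z -> R) : (forall i, f (i + 1)%Z = f i) -> forall i, f i = f 0%Z.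
Proof.
intros H i. assert (K := shift_Z f 1 0 ltac:(intros j; rewrite H; ring) i 0%Z).
rewrite Z.mul_1_r, Z.add_0_l in K. rewrite K; ring.
Qed.

Lemma int_const (f : Z -> R) : (forall i, exists z, f i = IZR z) ->
  (forall i, -1 < f (i + 1)%Z - f i < 1) -> forall i, f i = f 0%Z.
Proof.
intros Hi Hd. apply const_succ. intros i.
destruct (Hi i) as [a Ha]; destruct (Hi (i+1)%Z) as [b Hb].
specialize (Hd i). rewrite Ha, Hb in *. rewrite <- minus_IZR in Hd.
destruct Hd as [H1 H2]. apply lt_IZR in H1; apply lt_IZR in H2.
f_equal; lia.
Qed.

Lemma g_shift n g : Dn_equivariant n g -> INR n <> 0 ->
  forall k x, g (x + IZR k / INR n) = Rpow n k (g x).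
Proof.
intros [Hr _] Hn k. unfold Rpow. induction k using Z.peano_ind; intros x.
- simpl. replace (x + 0 / INR n) with x by (field; auto). replace (0 * _) with 0 by ring.
  rewrite rot0; auto.
- replace (x + IZR (Z.succ k) / INR n) with ((x + IZR k / INR n) + / INR n)
    by (rewrite succ_IZR; field; auto).
  rewrite Hr, IHk. unfold Rgen. rewrite rot_comp, succ_IZR. f_equal; ring.
- specialize (Hr (x + IZR (Z.pred k) / INR n)).
  replace (x + IZR (Z.pred k) / INR n + / INR n) with (x + IZR k / INR n) in Hr
    by (rewrite pred_IZR; field; auto).
  rewrite IHk in Hr. unfold Rgen in Hr.
  apply (f_equal (rot (- (2 * PI / INR n)))) in Hr. rewrite rot_inv in Hr.
  rewrite <- Hr, rot_comp, pred_IZR. f_equal; ring.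
Qed.

Lemma Derive_shift (f : R -> R) c x : ex_derive f (x + c) ->
  Derive (fun s => f (s + c)) x = Derive f (x + c).
Proof.
intros H. apply is_derive_unique.
destruct H as [l Hl].
rewrite (is_derive_unique _ _ _ Hl).
replace l with (1 * l) by ring.
apply (is_derive_comp f (fun s => s + c)); auto.
auto_derive; auto.
Qed.

Lemma Derive_lin (w u v : R -> R) a1 a2 c x :
  (forall s, w (s + c) = a1 * u s + a2 * v s) ->
  ex_derive w (x + c) -> ex_derive u x -> ex_derive v x ->
  Derive w (x + c) = a1 * Derive u x + a2 * Derive v x.
Proof.
intros H Hw Hu Hv.
rewrite <- Derive_shift by auto.
rewrite (Derive_ext _ (fun s => a1 * u s + a2 * v s)) by auto.
rewrite Derive_plus. rewrite !Derive_scal. auto.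
apply ex_derive_scal; auto. apply ex_derive_scal; auto.
Qed.

Lemma curv_shift n g k x : billiard_curve g -> Dn_equivariant n g -> INR n <> 0 ->
  curv g (x + IZR k / INR n) = curv g x.
Proof.
intros Hb He Hn.
destruct Hb as [[U1 [U2 _]] [[V1 [V2 _]] _]].
set (c := IZR k / INR n). set (b := IZR k * (2 * PI / INR n)).
assert (Hs : forall s, g (s + c) = rot b (g s)) by (intros; apply g_shift; auto).
set (u := fun s => fst (g s)). set (v := fun s => snd (g s)).
assert (E1 : forall s, u (s + c) = cos b * u s + (- sin b) * v s).
{ intros s; unfold u, v; rewrite Hs; unfold rot; simpl; ring. }
assert (E2 : forall s, v (s + c) = sin b * u s + cos b * v s).
{ intros s; unfold u, v; rewrite Hs; unfold rot; simpl; ring. }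
assert (D1 : forall s, Derive u (s + c) = cos b * Derive u s + (- sin b) * Derive v s).
{ intros s; apply Derive_lin; auto. }
assert (D2 : forall s, Derive v (s + c) = sin b * Derive u s + cos b * Derive v s).
{ intros s; apply Derive_lin; auto. }
assert (F1 : Derive (Derive u) (x + c) = cos b * Derive (Derive u) x + (- sin b) * Derive (Derive v) x).
{ apply Derive_lin; auto. }
assert (F2 : Derive (Derive v) (x + c) = sin b * Derive (Derive u) x + cos b * Derive (Derive v) x).
{ apply Derive_lin; auto. }
assert (H1 : Defs.d1 g (x + c) = rot b (Defs.d1 g x)).
{ unfold Defs.d1. fold u; fold v. rewrite D1, D2. unfold rot; simpl; f_equal; ring. }
assert (H2 : Defs.d2 g (x + c) = rot b (Defs.d2 g x)).
{ unfold Defs.d2. fold u; fold v. simpl.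
  change ((Derive (Derive u) (x + c), Derive (Derive v) (x + c)) =
    rot b (Derive (Derive u) x, Derive (Derive v) x)).
  rewrite F1, F2. unfold rot; simpl; f_equal; ring. }
unfold curv. rewrite H1, H2, det_rot, pnorm_rot. auto.
Qed.

Lemma rotnum_val (X : Z -> R) (n:nat) (p rho:R): (0<n)%nat ->
  (forall j:Z, X (0 + j * Z.of_nat n)%Z = X 0%Z + IZR j * p) ->
  rotation_number X rho -> rho = p / INR n.
Proof.
intros Hn HX Hr.
assert (Hn' : 0 < INR n) by (apply lt_0_INR; auto).
unfold rotation_number in Hr.
assert (Hs := is_lim_seq_subseq _ _ (fun k => (n * S k)%nat) ltac:(
  intros P [N HN]; exists N; intros k Hk; apply HN; nia) Hr).
simpl in Hs.
assert (H2 : is_lim_seq (fun k => X 0%Z / INR n * / INR (S k) + p / INR n) (p / INR n)).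
{ assert (Hl : is_lim_seq (fun k => X 0%Z / INR n * / INR (S k) + p / INR n) (X 0%Z / INR n * 0 + p / INR n)).
  2:{ replace (X 0%Z / INR n * 0 + p / INR n) with (p / INR n) in Hl by ring. exact Hl. }
  apply is_lim_seq_plus'. 2: apply is_lim_seq_const.
  replace (Finite (X 0%Z / INR n * 0)) with (Rbar_mult (X 0%Z / INR n) 0) by (simpl; auto).
  apply is_lim_seq_scal_l.
  replace (Finite 0) with (Rbar_inv p_infty) by reflexivity.
  apply is_lim_seq_inv. apply (is_lim_seq_incr_1 INR p_infty). apply is_lim_seq_INR.
  discriminate. }
assert (E : forall k, X (Z.of_nat (n * S k)) / INR (n * S k) =
   X 0%Z / INR n * / INR (S k) + p / INR n).
{ intros k. specialize (HX (Z.of_nat (S k))).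
  replace (0 + Z.of_nat (S k) * Z.of_nat n)%Z with (Z.of_nat (n * S k)) in HX by lia.
  rewrite HX. rewrite <- INR_IZR_INZ. rewrite mult_INR.
  assert (0 < INR (S k)) by (apply lt_0_INR; lia). field; lra. }
apply is_lim_seq_ext with (v := fun k => X 0%Z / INR n * / INR (S k) + p / INR n) in Hs; auto.
apply is_lim_seq_unique in Hs. apply is_lim_seq_unique in H2.
rewrite Hs in H2. injection H2; auto.
Qed.

Theorem mainTheorem14 (m n : nat) (g : R -> pt) (Zs : Z -> pt) (X : Z -> R) :
  Nat.gcd m n = 1%nat -> (1 <= m)%nat -> (m <= n - 1)%nat ->
  billiard_curve g -> Dn_equivariant n g ->
  billiard_seq_lift g Zs X ->
  (forall i, Zs (i + Z.of_nat n)%Z = Zs i) ->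
  rotation_number X (INR m / INR n) ->
  (forall k : Z, spatiotemporal_symmetry (Rpow n k) Zs) ->
  (Birkhoff X /\
   (forall i, Zs i = Rpow n (Z.of_nat m * i)%Z (Zs 0%Z)) /\
   (forall i, X i = X 0%Z + INR m / INR n * IZR i)) /\
  ((forall i, pdist (Zs (i + 1)%Z) (Zs i) = pdist (Zs 1%Z) (Zs 0%Z)) /\
   (forall i, curv g (X i) = curv g (X 0%Z))) /\
  (billiard_orbit g Zs X ->
   forall i, is_ccw_angle (psub (Zs i) (Zs (i - 1)%Z))
                          (psub (Zs (i + 1)%Z) (Zs i))
                          (2 * (INR m * PI / INR n))).
Proof.
intros Hgcd Hm1 Hmn Hb He [Hneq [Hd Hg]] Hper Hrot Hsym.
assert (Hn2 : (2 <= n)%nat) by lia.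
assert (Hnpos : 0 < INR n) by (apply lt_0_INR; lia).
assert (Hn0 : INR n <> 0) by lra.
assert (Hinj : forall x y, g x = g y -> exists k : Z, y = x + IZR k)
  by (destruct Hb as [_ [_ [_ [_ [H _]]]]]; exact H).
assert (HP : forall i, X (i + Z.of_nat n)%Z = X i + INR m).
{ set (f := fun i => X (i + Z.of_nat n)%Z - X i).
  assert (Hc : forall i, f i = f 0%Z).
  { apply int_const.
    - intros i. unfold f. destruct (Hinj (X (i + Z.of_nat n)%Z) (X i)) as [k Hk].
      rewrite !Hg, Hper; auto. exists (- k)%Z. rewrite opp_IZR. lra.
    - intros i. unfold f. replace (i + 1 + Z.of_nat n)%Z with ((i + Z.of_nat n) + 1)%Z by ring.
      pose proof (Hd (i + Z.of_nat n)%Z) as Ha. pose proof (Hd i) as Hd'. lra. }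
  assert (Hsh := shift_Z X (Z.of_nat n) (f 0%Z) ltac:(intros i; rewrite <- (Hc i); unfold f; ring)).
  assert (Hv := rotnum_val X n (f 0%Z) _ ltac:(lia) (fun j => Hsh j 0%Z) Hrot).
  assert (f 0%Z = INR m) by (apply (Rmult_eq_reg_r (/ INR n)); [|apply Rinv_neq_0_compat; auto];
     unfold Rdiv in Hv; lra).
  intros i. rewrite <- H, <- (Hc i). unfold f; ring. }
assert (HPz := shift_Z X _ _ HP).
assert (HR : forall x, Rpow n 1 (g x) = g (x + / INR n)).
{ intros x. rewrite <- g_shift; auto. f_equal. simpl; field; auto. }
assert (HD : forall i, X (i + 1)%Z = X i + INR m / INR n).
{ destruct (Hsym 1%Z) as [k [Hf | Hr]].
  -
    set (f := fun i => X (k + i)%Z - X i - / INR n).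
    assert (Hc : forall i, f i = f 0%Z).
    { apply int_const.
      - intros i. unfold f. destruct (Hinj (X i + / INR n) (X (k + i)%Z)) as [z Hz].
        rewrite <- HR, !Hg, Hf; auto. exists z. lra.
      - intros i. unfold f. replace (k + (i + 1))%Z with ((k + i) + 1)%Z by ring.
        pose proof (Hd (k + i)%Z) as Ha. pose proof (Hd i) as Hd'. lra. }
    destruct (Hinj (X 0%Z + / INR n) (X (k + 0)%Z)) as [q Hq].
    { rewrite <- HR, !Hg, Hf; auto. }
    set (c := / INR n + IZR q).
    assert (Hk : forall i, X (i + k)%Z = X i + c).
    { intros i. rewrite Z.add_comm. specialize (Hc i). unfold f in Hc.
      unfold c. rewrite Z.add_0_r in Hq. rewrite Z.add_0_r in Hc. lra. }
    assert (HKz := shift_Z X _ _ Hk).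
    assert (E1 := HKz (Z.of_nat n) 0%Z). assert (E2 := HPz k 0%Z).
    replace (0 + k * Z.of_nat n)%Z with (0 + Z.of_nat n * k)%Z in E2 by ring.
    rewrite E1 in E2.
    assert (Ez : (1 + Z.of_nat n * q = k * Z.of_nat m)%Z).
    { apply eq_IZR. rewrite plus_IZR, !mult_IZR, <- !INR_IZR_INZ.
      unfold c in E2. simpl. rewrite <- INR_IZR_INZ in E2.
      assert (E3 : INR n * (/ INR n + IZR q) = IZR k * INR m) by lra.
      rewrite Rmult_plus_distr_l, Rinv_r in E3; auto. }
    set (dd := fun i => X (i + 1)%Z - X i).
    assert (Dk : forall i, dd (i + k)%Z = dd i + 0).
    { intros i; unfold dd. replace (i + k + 1)%Z with ((i + 1) + k)%Z by ring.
      rewrite !Hk; ring. }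
    assert (Dn : forall i, dd (i + Z.of_nat n)%Z = dd i + 0).
    { intros i; unfold dd. replace (i + Z.of_nat n + 1)%Z with ((i + 1) + Z.of_nat n)%Z by ring.
      rewrite !HP; ring. }
    assert (Dc : forall i, dd i = dd 0%Z).
    { apply const_succ. intros i.
      replace (i + 1)%Z with ((i + Z.of_nat m * k) + (- q) * Z.of_nat n)%Z by lia.
      rewrite (shift_Z dd _ _ Dn), (shift_Z dd _ _ Dk). ring. }
    assert (H1 : forall i, X (i + 1)%Z = X i + dd 0%Z).
    { intros i. rewrite <- (Dc i). unfold dd; ring. }
    assert (E4 := shift_Z X _ _ H1 (Z.of_nat n) 0%Z).
    rewrite Z.mul_1_r, <- INR_IZR_INZ, HP in E4.
    intros i. rewrite H1. f_equal. field_simplify_eq; auto. lra.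
  -
    set (f := fun i => X (k - i)%Z - X i + IZR i - / INR n).
    assert (Hc : forall i, f i = f 0%Z).
    { apply int_const.
      - intros i. unfold f. destruct (Hinj (X i + / INR n) (X (k - i)%Z)) as [z Hz].
        rewrite <- HR, !Hg, Hr; auto. exists (z + i)%Z. rewrite plus_IZR. lra.
      - intros i. unfold f. rewrite plus_IZR.
        assert (Hx : X (k - i)%Z = X ((k - (i + 1)) + 1)%Z) by (f_equal; ring).
        pose proof (Hd (k - (i + 1))%Z) as Ha. pose proof (Hd i) as Hd'. simpl. lra. }
    assert (A1 := Hc (Z.of_nat n)). unfold f in A1.
    assert (A2 := HP (k - Z.of_nat n)%Z).
    replace (k - Z.of_nat n + Z.of_nat n)%Z with k in A2 by ring.
    assert (A3 := HP 0%Z). rewrite Z.add_0_l in A3.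
    rewrite Z.sub_0_r in A1. rewrite <- INR_IZR_INZ in A1. simpl in A1.
    assert (Enm : n = (2 * m)%nat).
    { apply INR_eq. rewrite mult_INR. simpl. lra. }
    subst n. rewrite Nat.mul_comm, Nat.gcd_mul_diag_l in Hgcd. subst m.
    destruct (Hinj (X 0%Z + / INR 2) (X (k - 0)%Z)) as [z Hz].
    { rewrite <- HR, !Hg, Hr; auto. }
    rewrite Z.sub_0_r in Hz.
    assert (A4 := Hc k). unfold f in A4. rewrite Z.sub_diag, Z.sub_0_r in A4. simpl in A4.
    assert (Ek : k = (1 + 2 * z)%Z).
    { apply eq_IZR. rewrite plus_IZR, mult_IZR. simpl in *. lra. }
    intros i. assert (A5 := Hc i). unfold f in A5. rewrite Z.sub_0_r in A5. simpl in A5.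
    assert (A6 := HPz (z - i)%Z (i + 1)%Z).
    replace (i + 1 + (z - i) * Z.of_nat (2 * 1))%Z with (k - i)%Z in A6 by (simpl; lia).
    rewrite minus_IZR in A6. simpl in *. lra.
}
set (r := INR m / INR n) in *.
assert (HXs : forall j i, X (i + j)%Z = X i + IZR j * r).
{ intros j i. rewrite <- (shift_Z X 1 r HD j i). f_equal; ring. }
assert (Hmul : forall i, IZR i * r = IZR (Z.of_nat m * i) / INR n).
{ intros i. unfold r. rewrite mult_IZR, <- INR_IZR_INZ. field; auto. }
assert (HXi : forall i, X i = X 0%Z + IZR (Z.of_nat m * i) / INR n).
{ intros i. rewrite <- Hmul, <- HXs. f_equal; ring. }
assert (HZ : forall i, Zs i = Rpow n (Z.of_nat m * i)%Z (Zs 0%Z)).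
{ intros i. rewrite <- !Hg, HXi, g_shift; auto. }
assert (Hstep : forall i, Zs (i + 1)%Z = Rpow n (Z.of_nat m) (Zs i)).
{ intros i. rewrite <- !Hg, HD. replace r with (IZR (Z.of_nat m) / INR n)
    by (unfold r; rewrite <- INR_IZR_INZ; auto). rewrite g_shift; auto. }
split; [split; [|split]|split; [split|]].
- intros i j l k H. rewrite !HXs. lra.
- exact HZ.
- intros i. rewrite <- (Z.add_0_l i) at 1. rewrite HXs. ring.
- intros i. assert (E : Zs (i + 1)%Z = Rpow n (Z.of_nat m * i)%Z (Zs 1%Z)).
  { rewrite <- !Hg. replace (i + 1)%Z with (1 + i)%Z by ring. rewrite HXs, Hmul, g_shift; auto. }
  rewrite E, (HZ i). unfold Rpow. apply pdist_rot.
- intros i. rewrite HXi. apply curv_shift; auto.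
- intros _ i. split.
  + assert (Hml : INR m < INR n) by (apply lt_INR; lia).
    assert (0 < PI) by apply PI_RGT_0.
    assert (0 <= INR m) by apply pos_INR.
    assert (Hq : INR m * / INR n < 1).
    { rewrite <- (Rinv_r (INR n)) by auto. apply Rmult_lt_compat_r; auto.
      apply Rinv_0_lt_compat; auto. }
    assert (0 < / INR n) by (apply Rinv_0_lt_compat; auto).
    assert (0 <= INR m * / INR n) by (apply Rmult_le_pos; lra).
    replace (2 * (INR m * PI / INR n)) with (2 * (PI * (INR m * / INR n))) by (unfold Rdiv; ring).
    split; nra.
  + assert (E : Zs i = Zs ((i - 1) + 1)%Z) by (f_equal; ring).
    rewrite (Hstep (i - 1)%Z) in E.
    rewrite (Hstep i). rewrite E. unfold Rpow. rewrite psub_rot, unitv_rot. f_equal.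
    rewrite <- INR_IZR_INZ. field; auto.
Qed.
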